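(* Let $a=\{a_k\}_{k=0}^\infty$ be a real sequence with $a_0>0$, $a_k\geq0$ for all $k$, $\lim_{k\to\infty}a_k=0$ and $\sum_{k=0}^\infty a_k=\infty$. Define $\{b_k\}_{k=0}^\infty$ by $b_0=1/a_0$ and $b_k=-\frac{1}{a_0}\sum_{j=0}^{k-1}a_{k-j}b_j$ for $k\geq1$, and let $u=\{u_k\}_{k=0}^\infty$ with $u_k=\sum_{j=0}^k b_j$. If $a$ has decay rate $\alpha\in[0,1]$ and $u$ has decay rate $\upsilon$, then $\upsilon\leq 1-\alpha$.
   Context: For $p\geq1$, $l^p$ denotes the space of real sequences $x=\{x_k\}_{k\ge0}$ with $\|x\|_p^p=\sum_{k=0}^\infty|x_k|^p<\infty$. For a sequence $x$ with $x_k\to0$, its decay rate is the number $1/p\in[0,1]$, where $p\geq1$ is such that $x\notin l^p$ but $x\in l^q$ for every $q>p$. The sequence $\{b_k\}$ gives the entries of the inverse of the half-infinite lower triangular Toeplitz matrix $A$ with entries $A_{ij}=a_{i-j}$ ($i\ge j$), and $u$ is called the fundamental matrix of $a$. *)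

(* Defs.v *)
From HB Require Import structures.
From mathcomp Require Import all_boot all_order all_algebra.
From mathcomp Require Import all_classical all_reals all_analysis.
Set Implicit Arguments. Unset Strict Implicit. Unset Printing Implicit Defensive.
Import Order.TTheory GRing.Theory Num.Theory.
Import numFieldNormedType.Exports.
Local Open Scope classical_set_scope.
Local Open Scope ring_scope.

Definition in_lp (R : realType) (p : R) (x : R^nat) : Prop :=
  cvg (series (fun k => `|x k| `^ p) @ \oo).

Definition has_decay_rate (R : realType) (x : R^nat) (r : R) : Prop :=
  x @ \oo --> (0 : R) /\ 0 <= r <= 1 /\
  (0 < r -> ~ in_lp r^-1 x /\ (forall q : R, r^-1 < q -> in_lp q x)) /\
  (r = 0 -> forall q : R, 1 <= q -> ~ in_lp q x).

(* Main.v *)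
Require Import Defs.
From HB Require Import structures.
From mathcomp Require Import all_boot all_order all_algebra.
From mathcomp Require Import all_classical all_reals all_analysis.
From mathcomp Require Import ring lra.
Import Order.TTheory GRing.Theory Num.Theory.
Import numFieldNormedType.Exports.
Local Open Scope classical_set_scope.
Local Open Scope ring_scope.


Section S0. Variable R : realType.
Lemma conv_one (a b : R^nat) :
  0 < a 0%N ->
  b 0%N = (a 0%N)^-1 ->
  (forall k, (0 < k)%N ->
     b k = - (a 0%N)^-1 * \sum_(0 <= j < k) a (k - j)%N * b j) ->
  forall k, \sum_(0 <= j < k.+1) a (k - j)%N * (\sum_(0 <= i < j.+1) b i) = 1.
Proof.
move=> a0 b0 brec.
have a0n : a 0%N != 0 by rewrite gt_eqF.
pose c k := \sum_(0 <= j < k.+1) a (k - j)%N * b j.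
have c0 : c 0%N = 1 by rewrite /c big_nat1 subnn b0 mulfV.
have cS k : c k.+1 = 0.
  rewrite /c big_nat_recr //= subnn brec //.
  by rewrite mulrA mulrN mulfV // mulN1r subrr.
elim=> [|k IH].
  by rewrite big_nat1 big_nat1 subnn b0 mulfV.
have H := cS k; rewrite /c (big_nat_recl k.+1) // subn0 in H.

rewrite (big_nat_recl k.+1) // subn0 big_nat1.
under eq_bigr => j _ do rewrite subSS (big_nat_recr j.+1) //= mulrDr.
rewrite big_split /= IH.
have -> : \sum_(0 <= i < k.+1) a (k - i)%N * b i.+1 = - (a k.+1 * b 0%N)
  by apply/eqP; rewrite -subr_eq0 opprK addrC H.
by rewrite addrCA subrr addr0.
Qed.

Lemma tri_eq (f g : nat -> R) N :
  \sum_(0 <= k < N) \sum_(0 <= j < k.+1) f (k - j)%N * g j =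
  \sum_(0 <= j < N) g j * \sum_(0 <= i < N - j) f i.
Proof.
elim: N => [|N IH]; first by rewrite !big_geq.
rewrite big_nat_recr //= IH.
rewrite [in RHS]big_nat_recr //= subSnn big_nat1.
rewrite (big_nat_recr N) //= subnn addrA (mulrC (g N)); congr (_ + _).
rewrite -big_split /=; apply: eq_big_nat => j /andP[_ jN].
rewrite (subSn (ltnW jN)).
rewrite (big_nat_recr (N - j)) //.
by rewrite mulrDr (mulrC (f _)).
Qed.


End S0.
Section S.
Variable R : realType.

Lemma pointwise (p y t : R) : 1 <= p -> 0 <= y -> 0 < t ->
  y <= t + y `^ p * t `^ (1 - p).
Proof.
move=> p1 y0 t0.
have h0 : 0 <= y `^ p * t `^ (1 - p) by rewrite mulr_ge0 ?powR_ge0.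
have [yt|ty] := leP y t; first by lra.
have tp : 0 < t `^ (p - 1) by rewrite powR_gt0.
have -> : y `^ p * t `^ (1 - p) = y * (y `^ (p - 1) / t `^ (p - 1)).
  rewrite -(mulr_powRB1 y0) ?(lt_le_trans _ p1) // -mulrA; congr (_ * _).
  by rewrite -powRN opprB.
have : y <= y * (y `^ (p - 1) / t `^ (p - 1)).
  apply: ler_peMr => //; rewrite ler_pdivlMr // mul1r.
  by apply: ge0_ler_powR; rewrite ?nnegrE; lra.
lra.
Qed.

Lemma lp_bound (x : R^nat) (s : R) : 0 < s -> s <= 1 -> in_lp s^-1 x ->
  exists K, 0 <= K /\ forall n : nat,
    \sum_(0 <= k < n.+1) `|x k| <= K * (n.+1%:R) `^ (1 - s).
Proof.
move=> s0 s1 hx.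
set p := s^-1.
have p1 : 1 <= p by rewrite /p invf_ge1.
set C := limn (series (fun k => `|x k| `^ p)).
have hC n : series (fun k => `|x k| `^ p) n <= C.
  apply: nondecreasing_cvgn_le => //.
  move=> m1 m2 le12; apply: nondecreasing_series => // k _ _.

have C0 : 0 <= C by have := hC 0%N; rewrite /series /= big_geq.
exists (1 + C); split; first lra.
move=> n.
set N : R := n.+1%:R.
have N0 : 0 < N by rewrite /N ltr0n.
set t := N `^ (- s).
have t0 : 0 < t by rewrite powR_gt0.
have Nt : N * t = N `^ (1 - s).
  by rewrite /t -{1}(powRr1 (ltW N0)) -powRD // (gt_eqF N0) implybT.
have tp : t `^ (1 - p) = N `^ (1 - s).
  rewrite /t -powRrM; congr (_ `^ _); rewrite /p; field.
  by rewrite gt_eqF.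
apply: (le_trans (y := \sum_(0 <= k < n.+1) (t + `|x k| `^ p * t `^ (1 - p)))).
  by apply: ler_sum => k _; apply: pointwise.
rewrite big_split /= -mulr_suml tp.
have -> : \sum_(0 <= i < n.+1) t = N `^ (1 - s).
  by rewrite sumr_const_nat subn0 -Nt mulr_natl.
have := hC n.+1; rewrite /series /=.
have := powR_ge0 N (1 - s).
nra.
Qed.

End S.

Theorem theorem3 (R : realType) (a b : R^nat) (alpha upsilon : R) :
  0 < a 0%N ->
  (forall k, 0 <= a k) ->
  a @ \oo --> (0 : R) ->
  series a @ \oo --> +oo ->
  b 0%N = (a 0%N)^-1 ->
  (forall k, (0 < k)%N ->
     b k = - (a 0%N)^-1 * \sum_(0 <= j < k) a (k - j)%N * b j) ->
  has_decay_rate a alpha ->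
  has_decay_rate (fun k => \sum_(0 <= j < k.+1) b j) upsilon ->
  upsilon <= 1 - alpha.
Proof.
move=> a0 age0 _ _ b0 brec [_ [/andP[al0 al1] [Hapos _]]] [_ [/andP[up0 up1] [Hupos _]]].
set u := fun k => \sum_(0 <= j < k.+1) b j.
have [//|H] := leP upsilon (1 - alpha).
exfalso.
have alg0 : 0 < alpha by lra.
have upg0 : 0 < upsilon by lra.
set d := (alpha + upsilon - 1) / 3.
have d0 : 0 < d by rewrite /d; lra.
set sa := alpha - d. set su := upsilon - d.
have sa0 : 0 < sa by rewrite /sa /d; lra.
have su0 : 0 < su by rewrite /su /d; lra.
have sa1 : sa <= 1 by rewrite /sa; lra.
have su1 : su <= 1 by rewrite /su; lra.
have ha : in_lp sa^-1 a.
  apply: (Hapos alg0).2; rewrite ltf_pV2 ?posrE //; rewrite /sa; lra.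
have hu : in_lp su^-1 u.
  apply: (Hupos upg0).2; rewrite ltf_pV2 ?posrE //; rewrite /su; lra.
have [Ka [Ka0 hKa]] := @lp_bound _ _ _ sa0 sa1 ha.
have [Ku [Ku0 hKu]] := @lp_bound _ _ _ su0 su1 hu.
set K := Ka * Ku.
have K0 : 0 <= K by rewrite mulr_ge0.
have key n : (n.+1%:R : R) `^ d <= K.
  set N : R := n.+1%:R.
  have N0 : 0 < N by rewrite /N ltr0n.
  have Nd0 : 0 < N `^ (1 - d) by rewrite powR_gt0.
  have e1 : N = \sum_(0 <= k < n.+1) \sum_(0 <= j < k.+1) a (k - j)%N * u j.
    rewrite (eq_bigr (fun _ => 1)); last by move=> k _; exact: conv_one.
    by rewrite sumr_const_nat subn0 /N.
  have e2 : N <= (\sum_(0 <= j < n.+1) `|u j|) * \sum_(0 <= i < n.+1) `|a i|.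
    rewrite {1}e1; apply: (le_trans (y := \sum_(0 <= k < n.+1)
       \sum_(0 <= j < k.+1) `|a (k - j)%N| * `|u j|)).
      apply: ler_sum => k _; apply: (le_trans (ler_norm _)).
      by apply: (le_trans (ler_norm_sum _ _ _)); apply: ler_sum => j _; rewrite normrM.
    rewrite (@tri_eq _ (fun i => `|a i|) (fun j => `|u j|)) mulr_suml; apply: ler_sum_nat => j /andP[_ jn].
    apply: ler_wpM2l => //.
    rewrite [X in _ <= X](big_cat_nat _ (n := n.+1 - j)) ?leq_subr //= lerDl.
    by apply: sumr_ge0 => i _.
  have e3 : N <= K * N `^ (1 - d).
    apply: (le_trans e2).
    have -> : 1 - d = (1 - su) + (1 - sa) by rewrite /su /sa /d; field.
    rewrite powRD; last by rewrite (gt_eqF N0) implybT.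
    rewrite /K (mulrC Ka) mulrACA.
    apply: ler_pM; [exact: sumr_ge0|exact: sumr_ge0|exact: hKu|exact: hKa].
  have e4 : N = N `^ d * N `^ (1 - d).
    by rewrite -powRD ?(gt_eqF N0) ?implybT // addrC subrK powRr1 // ltW.
  rewrite {1}e4 in e3.
  by move: e3; rewrite ler_pM2r.
pose m := Num.Def.archi_bound (K `^ d^-1).
have hm := archi_boundP (powR_ge0 K d^-1).
have := key m.
have : K < (m.+1%:R : R) `^ d.
  have -> : K = (K `^ d^-1) `^ d.
    by rewrite -powRrM mulVf ?gt_eqF // powRr1.
  apply: gt0_ltr_powR => //; rewrite ?nnegrE ?powR_ge0 //.
  by apply: (lt_le_trans hm); rewrite ler_nat.
lra.
Qed.
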